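(* Let $\Sigma$ be a finite set with at least two elements and $L\subseteq T_\Sigma^\omega$ a tree language accepted by some Büchi tree automaton. Then there is a set $C\subseteq T_\Sigma^\omega\times\mathbb{T}_\infty$, closed in $T_\Sigma^\omega\times\mathbb{T}_\infty$ (for the Cantor topology), accepted by some Büchi tree automaton as a subset of $T_{\Sigma\times2}^\omega$ identified with $T_\Sigma^\omega\times T_2^\omega$, and such that $L=\pi_0[C]$.
   Context: $T_\Sigma^\omega$ is the set of maps $\{l,r\}^*\to\Sigma$ with the Cantor topology (distance $2^{-n}$, $n$ least length of a node where the trees differ). A Büchi tree automaton is $\mathcal{A}=(\Sigma,Q,q_0,Q_f,\Delta)$ with finite $Q$, $q_0\in Q$, $Q_f\subseteq Q$, $\Delta\subseteq Q\times\Sigma\times Q\times Q$; a run on $t$ is $\rho:\{l,r\}^*\to Q$ with $\rho(\lambda)=q_0$ ($\lambda$ the root) and $(\rho(u),t(u),\rho(ul),\rho(ur))\in\Delta$ for all $u$; it is accepting if every path of $\rho$ visits $Q_f$ infinitely often; $L(\mathcal{A})$ is the set of trees with an accepting run. A path is the sequence of labels along an infinite branch from the root. $\mathbb{T}_\infty$ is the set of $t\in T_{\{0,1\}}^\omega$ every path of which has infinitely many $1$'s. $\pi_0$ is the first projection. *)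

(* Defs.v *)
From mathcomp Require Import all_boot.
Unset Printing Implicit Defensive.

(* Directions: l = false, r = true.  Nodes are words over {l,r}; u·l = rcons u false. *)
Definition node := seq bool.

Definition tree (A : Type) := node -> A.

Definition branch_node (b : nat -> bool) (n : nat) : node := [seq b i | i <- iota 0 n].

Record buchi (Sigma : Type) := Buchi {
  bQ : finType;
  bq0 : bQ;
  bQf : pred bQ;
  bDelta : bQ -> Sigma -> bQ -> bQ -> bool
}.
Arguments bQ {Sigma} _.
Arguments bq0 {Sigma} _.
Arguments bQf {Sigma} _ _.
Arguments bDelta {Sigma} _ _ _ _ _.

Definition is_run {Sigma : Type} (A : buchi Sigma) (t : tree Sigma) (rho : tree (bQ A)) : Prop :=
  rho [::] = bq0 A /\
  forall u : node, bDelta A (rho u) (t u) (rho (rcons u false)) (rho (rcons u true)).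

Definition accepting_run {Sigma : Type} (A : buchi Sigma) (rho : tree (bQ A)) : Prop :=
  forall b : nat -> bool, forall N : nat, exists2 n, N <= n & bQf A (rho (branch_node b n)).

Definition accepts {Sigma : Type} (A : buchi Sigma) (t : tree Sigma) : Prop :=
  exists rho, is_run A t rho /\ accepting_run A rho.

(* T_infinity: every path has infinitely many 1's (label 1 = true). *)
Definition T_inf (s : tree bool) : Prop :=
  forall b : nat -> bool, forall N : nat, exists2 n, N <= n & s (branch_node b n) = true.

(* Two trees agree on all nodes of length < n (Cantor distance < 2^-n ... basic cylinder). *)
Definition agree_below {A : Type} (n : nat) (t t' : tree A) : Prop :=
  forall u : node, size u < n -> t u = t' u.

(* C ⊆ T_Sigma × T_inf is closed in the subspace T_Sigma × T_inf of the product of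
   Cantor spaces: every point of T_Sigma × T_inf adherent to C belongs to C. *)
Definition closed_in_TxTinf {Sigma : Type} (C : tree Sigma -> tree bool -> Prop) : Prop :=
  forall (t : tree Sigma) (s : tree bool), T_inf s ->
    (forall n : nat, exists t' s', C t' s' /\ agree_below n t t' /\ agree_below n s s') ->
    C t s.

Definition pair_tree {Sigma : Type} (t : tree Sigma) (s : tree bool) : tree (Sigma * bool) :=
  fun u => (t u, s u).

(* Main.v *)
From Stdlib Require Import Classical ClassicalEpsilon.
Require Import Defs.
From mathcomp Require Import all_boot.

Definition loc {Sigma} (A : buchi Sigma) (t : tree Sigma) (s : tree bool)
  (rho : tree (bQ A)) (v : node) : Prop :=
  bDelta A (rho v) (t v) (rho (rcons v false)) (rho (rcons v true)) /\ s v = bQf A (rho v).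

Definition OKm {Sigma} (A : buchi Sigma) t s (u : node) (q : bQ A) (m : nat) :=
  exists rho : tree (bQ A), rho u = q /\ forall w : node, size w < m -> loc A t s rho (u ++ w).

Definition OKall {Sigma} (A : buchi Sigma) t s u q := forall m, OKm A t s u q m.

Lemma OKm_mono {Sigma} (A : buchi Sigma) t s u q m m' :
  m <= m' -> OKm A t s u q m' -> OKm A t s u q m.
Proof.
move=> hm [rho [r0 hr]]; exists rho; split=> // w hw; apply: hr.
exact: leq_trans hw hm.
Qed.

Lemma unif (T : finType) (P : T -> nat -> Prop) :
  (forall x m m', m <= m' -> P x m -> P x m') -> (forall x, exists m, P x m) ->
  exists M, forall x, P x M.
Proof.
move=> mono ex.
have: forall s : seq T, exists M, forall x, x \in s -> P x M.
  elim=> [|y s [M HM]]; first by exists 0.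
  have [m Hm] := ex y.
  exists (maxn m M) => x; rewrite inE => /orP [/eqP -> | xs].
    apply: mono Hm; exact: leq_maxl.
  apply: mono (HM x xs); exact: leq_maxr.
move=> /(_ (enum T)) [M HM]; exists M => x; apply: HM; by rewrite mem_enum.
Qed.

Lemma key {Sigma} (A : buchi Sigma) t s u q : OKall A t s u q ->
  exists q1 q2, bDelta A q (t u) q1 q2 /\ s u = bQf A q /\
    OKall A t s (rcons u false) q1 /\ OKall A t s (rcons u true) q2.
Proof.
move=> H.
have hs : s u = bQf A q.
  have [rho [r0 hr]] := H 1. have := hr [::] isT. rewrite /loc cats0 r0. by case.
apply: NNPP => hne.
have: forall p : (bQ A * bQ A)%type, exists m, (bDelta A q (t u) p.1 p.2 ->
   ~ (OKm A t s (rcons u false) p.1 m /\ OKm A t s (rcons u true) p.2 m)).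
  move=> [q1 q2] /=. case hd: (bDelta A q (t u) q1 q2); last by exists 0.
  have hn : ~ (OKall A t s (rcons u false) q1 /\ OKall A t s (rcons u true) q2).
    by move=> [h1 h2]; apply: hne; exists q1, q2; split.
  apply: NNPP => hm. apply: hn; split => m; apply: NNPP => hm'; apply: hm; exists m.
    by move=> _ [h1 h2]; apply: hm'.
  by move=> _ [h1 h2]; apply: hm'.
move=> /(unif _ _) [].
  move=> [q1 q2] m m' hmm' /= hP hd [h1 h2]; apply: hP => //; split;
  exact: OKm_mono hmm' _.
move=> M HM.
have [rho [r0 hr]] := H M.+1.
apply: (HM (rho (rcons u false), rho (rcons u true))) => /=.
  have := hr [::] isT; rewrite /loc cats0 r0; by case.
split; exists rho; split=> // w hw; rewrite cat_rcons; apply: hr; by rewrite /= ltnS.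
Qed.

Fixpoint go {Q : Type} (f : node -> Q -> Q * Q) (p : node) (q : Q) (w : node) : Q :=
  match w with
  | [::] => q
  | b :: w' => go f (rcons p b) (if b then (f p q).2 else (f p q).1) w'
  end.

Lemma go_rcons {Q : Type} (f : node -> Q -> Q * Q) p q w b :
  go f p q (rcons w b) =
  (if b then (f (p ++ w) (go f p q w)).2 else (f (p ++ w) (go f p q w)).1).
Proof.
elim: w p q => [|a w IH] p q /=; first by rewrite cats0.
by rewrite IH cat_rcons.
Qed.

Lemma go_inv {Sigma} (A : buchi Sigma) t s (f : node -> bQ A -> bQ A * bQ A) :
  (forall u q, OKall A t s u q ->
     OKall A t s (rcons u false) (f u q).1 /\ OKall A t s (rcons u true) (f u q).2) ->
  forall w p q, OKall A t s p q -> OKall A t s (p ++ w) (go f p q w).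
Proof.
move=> hf; elim=> [|a w IH] p q hpq /=; first by rewrite cats0.
rewrite -cat_rcons; apply: IH; have [h1 h2] := hf _ _ hpq; by case: a.
Qed.

Lemma build {Sigma} (A : buchi Sigma) t s : OKall A t s [::] (bq0 A) ->
  exists rho : tree (bQ A), rho [::] = bq0 A /\ forall u, loc A t s rho u.
Proof.
move=> h0.
have H : forall u q, exists pr : (bQ A * bQ A)%type, OKall A t s u q ->
   bDelta A q (t u) pr.1 pr.2 /\ s u = bQf A q /\
   OKall A t s (rcons u false) pr.1 /\ OKall A t s (rcons u true) pr.2.
  move=> u q; case: (classic (OKall A t s u q)) => h.
    have [q1 [q2 hk]] := @key _ A t s u q h; by exists (q1, q2).
  by exists (q, q).
pose nxt := fun u q => proj1_sig (constructive_indefinite_description _ (H u q)).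
have hn : forall u q, OKall A t s u q ->
   bDelta A q (t u) (nxt u q).1 (nxt u q).2 /\ s u = bQf A q /\
   OKall A t s (rcons u false) (nxt u q).1 /\ OKall A t s (rcons u true) (nxt u q).2.
  move=> u q; exact: (proj2_sig (constructive_indefinite_description _ (H u q))).
exists (fun u => go nxt [::] (bq0 A) u); split=> // u.
have hinv := @go_inv _ A t s nxt (fun u q h => proj2 (proj2 (hn u q h))) u [::] _ h0.
rewrite /loc !go_rcons /=.
by have [? [? _]] := hn _ _ hinv.
Qed.

Theorem lemma4p2 (Sigma : finType) (hS : 1 < #|Sigma|)
    (L : tree Sigma -> Prop)
    (hL : exists A : buchi Sigma, forall t, L t <-> accepts A t) :
  exists C : tree Sigma -> tree bool -> Prop,
    (forall t s, C t s -> T_inf s) /\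
    closed_in_TxTinf C /\
    (exists B : buchi (Sigma * bool), forall t s, C t s <-> accepts B (pair_tree t s)) /\
    (forall t, L t <-> exists s, C t s).
Proof.
case: hL => A hA.
exists (fun t s => exists rho, is_run A t rho /\ accepting_run A rho /\
                     forall u, s u = bQf A (rho u)).
split.
  move=> t s [rho [_ [acc hs]]] b N; have [n hn hq] := acc b N; exists n => //.
  by rewrite hs.
split.
  move=> t s hinf hadh.
  have ok0 : OKall A t s [::] (bq0 A).
    move=> m; have [t' [s' [[rho [[r0 hr] [_ hs']]] [ht hs2]]]] := hadh m.
    exists rho; split => // w hw; rewrite /loc /=.
    rewrite (ht w hw) (hs2 w hw); split; [exact: hr | exact: hs'].
  have [rho [r0 hl]] := @build _ A t s ok0.
  exists rho; split; first by split=> // u; case: (hl u).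
  split; last by move=> u; exact: (proj2 (hl u)).
  move=> b N; have [n hn h] := hinf b N; exists n => //.
  by rewrite -(proj2 (hl _)) h.
split.
  exists (@Buchi _ (bQ A) (bq0 A) (bQf A)
            (fun q (x : Sigma * bool) q1 q2 => bDelta A q x.1 q1 q2 && (x.2 == bQf A q))).
  move=> t s; split.
    move=> [rho [[r0 hr] [acc hs]]]; exists rho; split; last exact: acc.
    split => // u; by rewrite /pair_tree /= hr hs eqxx.
  move=> [rho [[r0 hr] acc]]; exists rho; split.
    split => // u; by have /andP[] := hr u.
  split => // u; by have /andP[_ /eqP] := hr u.
move=> t; rewrite hA; split => [[rho [hr acc]] | [s [rho [hr [acc _]]]]].
  by exists (fun u => bQf A (rho u)), rho.
by exists rho.
Qed.
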